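(* Let $n\ge2$ and $\Delta\subset B_n$ a proper ideal. Then for $0\le i\le n-1$, $$h_i(\mathrm{Bier}(B_n,\Delta))=\#\{(A;x) \text{ facet of } \mathrm{Bier}(B_n,\Delta) : |A\cap(x,n]|+|[1,x)\setminus A|=i\}.$$ Equivalently (reversing the order of the ground set), $h_i(\mathrm{Bier}(B_n,\Delta))=\#\{(A;x): |A\cap[1,x)|+|(x,n]\setminus A|=i\}$.
   Context: $B_n$ is the Boolean lattice of subsets of $[1,n]=\{1,\dots,n\}$; $(x,n]=\{x+1,\dots,n\}$, $[1,x)=\{1,\dots,x-1\}$. A proper ideal $\Delta\subset B_n$ is a nonempty family of subsets of $[1,n]$ closed under taking subsets with $[1,n]\notin\Delta$. The Bier sphere $\mathrm{Bier}(B_n,\Delta)$ is the simplicial complex whose faces are the pairs $(B,C)$ with $B\subsetneq C\subseteq[1,n]$, $B\in\Delta$, $C\notin\Delta$, with $(B',C')$ a face of $(B,C)$ iff $B'\subseteq B$ and $C\subseteq C'$; the face $(B,C)$ has $|B|+n-|C|$ vertices (the empty face is $(\emptyset,[1,n])$). Its facets are $(A;x):=(A,A\cup\{x\})$ with $A\in\Delta$, $x\notin A$, $A\cup\{x\}\notin\Delta$, each with $n-1$ vertices. For a simplicial complex $\Gamma$ all of whose facets have $n-1$ vertices, $f_j(\Gamma)$ is the number of faces with $j$ vertices ($f_0=1$) and $h_i(\Gamma):=\sum_{j=0}^{n-1}(-1)^{i+j}\binom{n-1-j}{n-1-i}f_j(\Gamma)$ for $0\le i\le n-1$, $h_i:=0$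 otherwise. *)

(* Defs.v *)
(* Ground set [1,n] is modelled by 'I_n (element k : 'I_n
   stands for k+1); the order is preserved, so (x,n] = [set y : 'I_n | x < y] and
   [1,x) = [set y : 'I_n | y < x]. *)
From mathcomp Require Import all_boot all_order all_algebra.
Set Implicit Arguments. Unset Strict Implicit. Unset Printing Implicit Defensive.
Import GRing.Theory Num.Theory.

Definition Bn_proper_ideal (n : nat) (D : {set {set 'I_n}}) : Prop :=
  [/\ D != set0,
      (forall B C : {set 'I_n}, C \in D -> B \subset C -> B \in D)
    & [set: 'I_n] \notin D].

Definition bier_face (n : nat) (D : {set {set 'I_n}}) (BC : {set 'I_n} * {set 'I_n}) : bool :=
  [&& BC.1 \proper BC.2, BC.1 \in D & BC.2 \notin D].

Definition face_nvert (n : nat) (BC : {set 'I_n} * {set 'I_n}) : nat :=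
  #|BC.1| + n - #|BC.2|.

Definition bier_f (n : nat) (D : {set {set 'I_n}}) (j : nat) : nat :=
  #|[set BC | bier_face D BC & face_nvert BC == j]|.

Definition bier_h (n : nat) (D : {set {set 'I_n}}) (i : nat) : int :=
  (\sum_(j < n) (-1) ^+ (i + j) * ('C(n.-1 - j, n.-1 - i))%:Z * (bier_f D j)%:Z)%R.

(* facets (A;x) = (A, A u {x}) *)
Definition bier_facet (n : nat) (D : {set {set 'I_n}}) (Ax : {set 'I_n} * 'I_n) : bool :=
  [&& Ax.1 \in D, Ax.2 \notin Ax.1 & (Ax.2 |: Ax.1) \notin D].

Definition stat1 (n : nat) (Ax : {set 'I_n} * 'I_n) : nat :=
  #|Ax.1 :&: [set y : 'I_n | Ax.2 < y]| + #|[set y : 'I_n | y < Ax.2] :\: Ax.1|.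

Definition stat2 (n : nat) (Ax : {set 'I_n} * 'I_n) : nat :=
  #|Ax.1 :&: [set y : 'I_n | y < Ax.2]| + #|[set y : 'I_n | Ax.2 < y] :\: Ax.1|.

(* Main.v *)
Require Import Defs.
From mathcomp Require Import all_boot all_order all_algebra.
From mathcomp Require Import zify ring.
Set Implicit Arguments. Unset Strict Implicit.

Section Comb.
Variable n : nat.
Variable D : {set {set 'I_n}}.
Hypothesis Ddown : forall B C : {set 'I_n}, C \in D -> B \subset C -> B \in D.
Variable rk : 'I_n -> nat.
Hypothesis rk_inj : injective rk.

Definition Ls (x : 'I_n) := [set y | rk y < rk x].
Definition Rs (x : 'I_n) := [set y | rk x < rk y].
Definition stg (F : {set 'I_n} * 'I_n) := #|F.1 :&: Rs F.2| + #|Ls F.2 :\: F.1|.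
Definition UF (F : {set 'I_n} * 'I_n) := (F.1 :&: Ls F.2) :|: (Rs F.2 :\: F.1).
Definition Psi (F : {set 'I_n} * 'I_n) (S : {set 'I_n}) :=
  (F.1 :\: (S :&: Ls F.2), (F.2 |: F.1) :|: (S :&: Rs F.2)).
Definition Rec (F : {set 'I_n} * 'I_n) (G : {set 'I_n} * {set 'I_n}) :=
  (F.1 :\: G.1) :|: (G.2 :\: (F.2 |: F.1)).
Definition inI (F : {set 'I_n} * 'I_n) (G : {set 'I_n} * {set 'I_n}) :=
  [&& F.2 \in G.2, F.2 \notin G.1 & F.1 == G.1 :|: (G.2 :&: Ls F.2)].

Lemma LR_card x : #|Ls x| + #|Rs x| = n.-1.
Proof.
have -> : n.-1 = #|[set~ x]| by rewrite cardsC1 card_ord.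
have -> : [set~ x] = Ls x :|: Rs x.
  apply/setP => y; rewrite !inE; case: (eqVneq y x) => [->|yx]; first by rewrite ltnn.
  by case: ltngtP => // /rk_inj e; rewrite e eqxx in yx.
rewrite cardsU.
have -> : Ls x :&: Rs x = set0.
  by apply/setP => y; rewrite !inE; apply/negbTE; lia.
by rewrite cards0 subn0.
Qed.

Lemma U_card F : #|UF F| + stg F = n.-1.
Proof.
case: F => A x; rewrite /UF /stg /=.
rewrite cardsU.
have -> : (A :&: Ls x) :&: (Rs x :\: A) = set0.
  by apply/setP => y; rewrite !inE; case: (y \in A); rewrite ?andbF //= ?andbT.

rewrite cards0 subn0.
have h1 : #|A :&: Ls x| + #|Ls x :\: A| = #|Ls x| by rewrite setIC cardsID.
have h2 : #|A :&: Rs x| + #|Rs x :\: A| = #|Rs x| by rewrite setIC cardsID.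
have h3 := LR_card x.
rewrite -h3 -h1 -h2.
transitivity (#|A :&: Ls x| + #|Ls x :\: A| + (#|A :&: Rs x| + #|Rs x :\: A|)); last by []. 
transitivity (#|A :&: Ls x| + #|Rs x :\: A| + (#|A :&: Rs x| + #|Ls x :\: A|)); first by []. lia.
Qed.


Lemma inI_lt F F' G : bier_facet D F -> bier_facet D F' -> inI F G -> inI F' G ->
  rk F.2 < rk F'.2 -> False.
Proof.
case: F => A x; case: F' => A' x'; case: G => B C.
rewrite /bier_facet /inI /= => /and3P[AD xA xAD] /and3P[AD' xA' xAD'].
move=> /and3P[xC xB /eqP eA] /and3P[xC' xB' /eqP eA'] lt.
move/negP: xAD; apply; apply: (Ddown AD'); apply/subsetP => y.
rewrite eA eA' !inE => /orP[/eqP ->|]; first by rewrite xC lt orbT.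
by case/orP=> [->//|/andP[-> h]]; rewrite (ltn_trans h lt) orbT.
Qed.

Lemma inI_uniq F F' G : bier_facet D F -> bier_facet D F' -> inI F G -> inI F' G ->
  F = F'.
Proof.
move=> f f' i i'.
case: (ltngtP (rk F.2) (rk F'.2)) => [l|l|].
- by case: (inI_lt f f' i i' l).
- by case: (inI_lt f' f i' i l).
move/rk_inj; case: F f i => A x f i; case: F' f' i' => A' x' f' i' /= ex; subst x'.
by move: i i'; rewrite /inI /= => /and3P[_ _ /eqP ->] /and3P[_ _ /eqP ->].
Qed.


Lemma exists_facet G : bier_face D G -> exists F, bier_facet D F && inI F G.
Proof.
case: G => B C; rewrite /bier_face /= => /and3P[BC BD CD].
have [BsC [y0 y0C y0B]] := properP BC.
pose Af y := B :|: (C :&: Ls y).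
pose P y := (y \in C :\: B) && (Af y \in D).
have [y1 Py1] : exists y, P y.
  have Q0 : (fun y => y \in C :\: B) y0 by rewrite /= inE y0C y0B.
  case: (@arg_minnP _ y0 (fun y => y \in C :\: B) rk Q0) => y1 y1CB min1.
  exists y1; rewrite /P y1CB /=.
  have -> : Af y1 = B; last by [].
  apply/setP=> z; rewrite !inE; case zB: (z \in B) => //=; apply/negbTE/negP => /andP[zC lt].
  have := min1 z; rewrite !inE zB zC /= => /(_ isT); by rewrite leqNgt lt.
case: (@arg_maxnP _ y1 P rk Py1) => x /andP[xCB AxD] max.
move: xCB; rewrite inE => /andP[xB xC].
exists (Af x, x); rewrite /bier_facet /inI /= AxD xC xB eqxx !andbT /=.
apply/andP; split.
  by rewrite !inE (negbTE xB) ltnn andbF.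
apply/negP => xAD.
case: (pickP (fun z => (z \in C :\: B) && (rk x < rk z))) => [z0 Hz0 | none].
  case: (@arg_minnP _ z0 (fun z => (z \in C :\: B) && (rk x < rk z)) rk Hz0) => z /andP[zCB xz] minz.
  have : P z.
    rewrite /P zCB /=; apply: (Ddown xAD); apply/subsetP => y; rewrite !inE.
    case yB: (y \in B) => /=; first by rewrite orbT.
    case/andP => yC yz.
    case: (eqVneq y x) => //= yx.
    case: (ltngtP (rk y) (rk x)) => [h|h|/rk_inj e]; [by rewrite yC | | by rewrite e eqxx in yx].
    have := minz y; rewrite !inE yB yC h /= => /(_ isT); by rewrite leqNgt yz.
  by move/max; rewrite /= leqNgt xz.
move/negP: CD; apply; apply: (Ddown xAD); apply/subsetP => y yC; rewrite !inE yC /=.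
case yB: (y \in B) => //=; rewrite ?orbT //.
case: (eqVneq y x) => //= yx.
have := none y; rewrite !inE yB yC /= => /negbT h.
case: (ltngtP (rk y) (rk x)) => [//|h'|/rk_inj e]; [by rewrite h' in h | by rewrite e eqxx in yx].
Qed.


Ltac pw y x := let yx := fresh "yx" in let hh := fresh "hh" in
  case: (eqVneq y x) => [->|yx]; [ | rewrite ?(negbTE yx);
  case: (ltngtP (rk y) (rk x)) => [hh|hh|/rk_inj hh]; [ | | by rewrite hh eqxx in yx]].

Ltac fin := repeat (match goal with |- context [?a \in ?B] => case: (a \in B) end);
  try (by []); try (by move=> /(_ isT)); try (by move=> _).

Lemma psi_inI F (S : {set 'I_n}) : bier_facet D F -> S \subset UF F -> inI F (Psi F S).
Proof.
case: F => A x; rewrite /bier_facet /inI /UF /Psi /= => /and3P[AD xA xAD] sS.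
rewrite !inE eqxx (negbTE xA) /= andbF /=.
apply/eqP/setP => y; have := subsetP sS y; rewrite !inE.
pw y x; rewrite ?ltnn ?(negbTE xA); fin.
Qed.


Lemma psi_rec F (S : {set 'I_n}) : bier_facet D F -> S \subset UF F -> Rec F (Psi F S) = S.
Proof.
case: F => A x; rewrite /bier_facet /Rec /UF /Psi /= => /and3P[AD xA xAD] sS.
apply/setP => y; have := subsetP sS y; rewrite !inE.
pw y x; rewrite ?ltnn ?(negbTE xA); fin.
Qed.

Lemma rec_psi F G : bier_face D G -> bier_facet D F -> inI F G ->
  Rec F G \subset UF F /\ Psi F (Rec F G) = G.
Proof.
case: F => A x; case: G => B C.
rewrite /bier_face /bier_facet /inI /Rec /UF /Psi /= => /and3P[BC BD CD] /and3P[AD xA xAD].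
case/and3P => xC xB /eqP eA; subst A.
have [BsC _] := properP BC.
split.
  apply/subsetP => y; have := subsetP BsC y; rewrite !inE.
  pw y x; rewrite ?ltnn ?(negbTE xB) ?xC; fin.
congr pair; apply/setP => y; have := subsetP BsC y; rewrite !inE.
  pw y x; rewrite ?ltnn ?(negbTE xB) ?xC; fin.
pw y x; rewrite ?ltnn ?(negbTE xB) ?xC; fin.
Qed.


Lemma psi_face F (S : {set 'I_n}) : bier_facet D F -> S \subset UF F -> bier_face D (Psi F S).
Proof.
case: F => A x; rewrite /bier_facet /bier_face /UF /Psi /= => /and3P[AD xA xAD] sS.
apply/and3P; split.
- apply/properP; split.
    by apply/subsetP => y; rewrite !inE => /andP[_ ->]; rewrite orbT.
  by exists x; rewrite !inE ?eqxx // (negbTE xA) andbF.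
- by apply: (Ddown AD); exact: subsetDl.
- apply/negP => CD; move/negP: xAD; apply; apply: (Ddown CD); exact: subsetUl.
Qed.

Lemma psi_nv F (S : {set 'I_n}) : bier_facet D F -> S \subset UF F ->
  face_nvert (Psi F S) = n.-1 - #|S|.
Proof.
case: F => A x; rewrite /bier_facet /face_nvert /UF /Psi /= => /and3P[AD xA xAD] sS.
have e1 : A :&: (S :&: Ls x) = S :&: Ls x.
  apply/setP => y; have := subsetP sS y; rewrite !inE.
  pw y x; rewrite ?ltnn ?(negbTE xA); fin.
have h1 := cardsID (S :&: Ls x) A; rewrite e1 in h1.
have e2 : S :\: Ls x = S :&: Rs x.
  apply/setP => y; have := subsetP sS y; rewrite !inE.
  pw y x; rewrite ?ltnn ?(negbTE xA); fin.
have h3 := cardsID (Ls x) S; rewrite e2 in h3.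
have e3 : (x |: A) :&: (S :&: Rs x) = set0.
  apply/setP => y; have := subsetP sS y; rewrite !inE.
  pw y x; rewrite ?ltnn ?(negbTE xA); fin.
have h2 := cardsU (x |: A) (S :&: Rs x); rewrite e3 cards0 subn0 cardsU1 xA in h2.
have h4 := max_card (x |: A :|: S :&: Rs x); rewrite card_ord h2 in h4.
rewrite h2; move: h1 h3 h4.
set a := #|A :\: S :&: Ls x|; set b := #|S :&: Ls x|; set c := #|S :&: Rs x|.
set d := #|A|; set e := #|S|; rewrite -[true + _]/(1 + d) => h1 h3 h4.
lia.
Qed.


Lemma f_formula j : j < n ->
  bier_f D j = \sum_(F | bier_facet D F) 'C(#|UF F|, n.-1 - j).
Proof.
move=> jn.
pose k := n.-1 - j.
pose P := [set p : ({set 'I_n} * 'I_n) * {set 'I_n} |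
   bier_facet D p.1 && ((p.2 \subset UF p.1) && (#|p.2| == k))].
have -> : \sum_(F | bier_facet D F) 'C(#|UF F|, k) = #|P|.
  rewrite /P -sum1dep_card.
  rewrite -(pair_big_dep (fun F => bier_facet D F)
     (fun F (S : {set 'I_n}) => (S \subset UF F) && (#|S| == k)) (fun _ _ => 1)) /=.
  by apply: eq_bigr => F _; rewrite sum1dep_card cards_draws.
rewrite /bier_f.
have -> : [set BC | bier_face D BC & face_nvert BC == j] = (fun p => Psi p.1 p.2) @: P.
  apply/setP => G; rewrite inE; apply/idP/imsetP.
  - case/andP => fG /eqP nvG.
    have [F /andP[fF iF]] := exists_facet fG.
    have [sR eG] := rec_psi fG fF iF.
    exists (F, Rec F G); last by rewrite /= eG.
    rewrite inE /= fF sR /=.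
    have := psi_nv fF sR; rewrite eG nvG /k => ->.
    have hU := U_card F; have hR := subset_leq_card sR.
    move: hU hR; set a := #|Rec F G|; set b := #|UF F|; move=> hU hR.
    apply/eqP; lia.
  - case=> p; rewrite inE => /andP[fp /andP[sp /eqP cp]] ->.
    rewrite psi_face //=; apply/eqP; rewrite psi_nv // cp /k; lia.
rewrite card_in_imset //.
move=> p q; rewrite !inE => /andP[fp /andP[sp _]] /andP[fq /andP[sq _]] /= e.
have ip := psi_inI fp sp; have iq := psi_inI fq sq.
rewrite e in ip.
have eF := inI_uniq fp fq ip iq.
have e2 : p.2 = q.2 by rewrite -(psi_rec fp sp) -(psi_rec fq sq) e eF.
by move: eF e2; case: p {fp sp e ip} => [? ?]; case: q {fq sq iq} => [? ?] /= -> ->.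
Qed.

End Comb.

Local Open Scope ring_scope.
Import GRing.Theory Num.Theory.

Lemma trinom (a m b : nat) : (a <= m <= b)%N ->
  ('C(b, m) * 'C(m, a) = 'C(b, a) * 'C(b - a, m - a))%N.
Proof.
move=> /andP[am mb].
have H : forall x y z : nat, (0 < z)%N -> (x * z = y * z)%N -> x = y.
  by move=> x y z z0 /eqP; rewrite eqn_pmul2r // => /eqP.
apply: (H _ _ (a`! * (m - a)`! * (b - m)`!)); first by rewrite !muln_gt0 !fact_gt0.
have e1 : ('C(b, m) * 'C(m, a) * (a`! * (m - a)`! * (b - m)`!) = 'C(b,m) * ('C(m, a) * (a`! * (m - a)`!)) * (b - m)`!)%N by ring.
rewrite e1 bin_fact //.
have e2 : ('C(b, m) * m`! * (b - m)`! = 'C(b,m) * (m`! * (b - m)`!))%N by ring.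
rewrite e2 bin_fact ?(leq_trans am) //.
have e3 : ('C(b, a) * 'C(b - a, m - a) * (a`! * (m - a)`! * (b - m)`!) =
   'C(b, a) * (a`! * ('C(b - a, m - a) * ((m - a)`! * ((b - a) - (m - a))`!))))%N.
  have -> : (b - a - (m - a) = b - m)%N by lia.
  ring.
rewrite e3 bin_fact; last by lia.
by rewrite bin_fact //; exact: leq_trans am mb.
Qed.

Lemma alt_id (d i s : nat) : (s <= d)%N -> (i <= d)%N ->
  \sum_(j < d.+1) (-1) ^+ (i + j)%N * ('C(d - j, d - i))%:Z * ('C(d - s, d - j))%:Z
    = (i == s)%:Z.
Proof.
move=> sd id.
pose F j : int := (-1) ^+ (i + j)%N * ('C(d - j, d - i))%:Z * ('C(d - s, d - j))%:Z.
have F0 : forall j, (j < s)%N || (i < j)%N -> (j <= d)%N -> F j = 0.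
  move=> j /orP[] jl jd; rewrite /F.
    by rewrite (@bin_small (d - s)) ?mulr0 //; lia.
  by rewrite (@bin_small (d - j)) ?mulr0 ?mul0r //; lia.
rewrite -/(\sum_(j < d.+1) F j) -(big_mkord xpredT).
have [si | lis] := leqP s i; last first.
  rewrite big1_seq; first by rewrite (ltn_eqF lis).
  move=> j /andP[_]; rewrite mem_index_iota => /andP[_ jd]; apply: F0 => //.
  by case: (ltnP j s) => //= ? ; lia.
rewrite (big_cat_nat _ (n:=s)) //=; last by lia.
rewrite big1_seq ?add0r; last first.
  move=> j /andP[_]; rewrite mem_index_iota => /andP[_ jd]; apply: F0; lia.
rewrite (big_cat_nat _ (n:=i.+1)) //=; last by lia.
rewrite [X in _ + X]big1_seq ?addr0; last first.
  move=> j /andP[_]; rewrite mem_index_iota => /andP[ij jd]; apply: F0; lia.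
rewrite -{1}(add0n s) big_addn big_mkord.
set c := (i.+1 - s)%N.
have cE : c = (i - s).+1 by rewrite /c subSn.
have Ft : forall t : 'I_c, F (t + s)%N = ('C(d - s, d - i))%:Z * ((-1) ^+ (i - s - t)%N * ('C(i - s, t))%:Z).
  move=> [t ht] /=; rewrite /F.
  have tl : (t <= i - s)%N by rewrite cE in ht.
  have e : ('C(d - (t + s), d - i) * 'C(d - s, d - (t + s)) = 'C(d - s, d - i) * 'C(i - s, t))%N.
    rewrite mulnC trinom; last by lia.
    have -> : (d - s - (d - i) = i - s)%N by lia.
    have -> : (d - (t + s) - (d - i) = i - s - t)%N by lia.
    by rewrite bin_sub.
  rewrite -mulrA -PoszM e PoszM.
  have -> : (i + (t + s) = (i - s - t) + (t + s) * 2)%N by lia.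
  by rewrite exprD exprM sqrr_sign mulr1 mulrCA.
rewrite (eq_bigr _ (fun t _ => Ft t)) -big_distrr /=.
rewrite cE.
have -> : \sum_(t < (i - s).+1) ((-1) ^+ (i - s - t) * ('C(i - s, t))%:Z) = (-1 + 1) ^+ (i - s).
  by rewrite exprDn; apply: eq_bigr => t _; rewrite expr1n mulr1 -mulr_natr natz.
rewrite addNr expr0n.
case: (eqVneq i s) => [<-|ne]; first by rewrite subnn binn.
have -> : (i - s == 0)%N = false by apply/negbTE; lia.
by rewrite mulr0.
Qed.


Lemma sumZ (I : finType) (P : pred I) (f : I -> nat) :
  ((\sum_(x | P x) f x)%N)%:Z = \sum_(x | P x) (f x)%:Z.
Proof. by rewrite -natz natr_sum; apply: eq_bigr => x _; rewrite natz. Qed.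

Lemma alt_id_n (n i s : nat) : (0 < n)%N -> (s <= n.-1)%N -> (i <= n.-1)%N ->
  \sum_(j < n) (-1) ^+ (i + j)%N * ('C(n.-1 - j, n.-1 - i))%:Z * ('C(n.-1 - s, n.-1 - j))%:Z
    = (i == s)%:Z.
Proof. by case: n => // d _; apply: alt_id. Qed.

Lemma h_formula (n : nat) (D : {set {set 'I_n}}) (rk : 'I_n -> nat)
  (Ddown : forall B C : {set 'I_n}, C \in D -> B \subset C -> B \in D)
  (rk_inj : injective rk) (i : nat) : (0 < n)%N -> (i <= n.-1)%N ->
  bier_h D i = (#|[set F | bier_facet D F & stg rk F == i]|%N)%:Z.
Proof.
move=> n0 id; rewrite /bier_h.
transitivity (\sum_(j < n) \sum_(F | bier_facet D F)
   ((-1) ^+ (i + j)%N * ('C(n.-1 - j, n.-1 - i))%:Z * ('C(n.-1 - stg rk F, n.-1 - j))%:Z)).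
  apply: eq_bigr => j _; rewrite (f_formula Ddown rk_inj (ltn_ord j)).
  rewrite sumZ mulr_sumr; apply: eq_bigr => F _.
  have hu := U_card rk_inj F.
  by rewrite -hu addnK.
rewrite exchange_big /=.
transitivity (\sum_(F | bier_facet D F) (i == stg rk F)%:Z).
  apply: eq_bigr => F _; apply: alt_id_n => //.
  have hu := U_card rk_inj F; rewrite -hu; exact: leq_addl.
rewrite -sum1dep_card sumZ [RHS]big_mkcondr /=.
apply: eq_bigr => F _; rewrite eq_sym; by case: (stg rk F == i).
Qed.

Unset Implicit Arguments.

Theorem mainTheorem9 (n : nat) (D : {set {set 'I_n}}) :
  (1 < n)%N -> Bn_proper_ideal D ->
  forall i : nat, (i <= n.-1)%N ->
    bier_h D i = (#|[set Ax | bier_facet D Ax & stat1 Ax == i]|%N)%:Z /\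
    bier_h D i = (#|[set Ax | bier_facet D Ax & stat2 Ax == i]|%N)%:Z.
Proof.
move=> n1 [_ Ddown _] i id.
have n0 : (0 < n)%N by apply: ltnW.
split.
  exact: (h_formula Ddown (@ord_inj n) n0 id).
have rinj : injective (fun y : 'I_n => (n - y)%N).
  move=> a b /= e; apply: val_inj => /=; have := ltn_ord a; have := ltn_ord b; lia.
rewrite (h_formula Ddown rinj n0 id); congr (Posz _); apply: eq_card => F.
rewrite !inE; congr (_ && _); case: F => A x; rewrite /stg /stat2 /Ls /Rs /=.
have e1 : [set y : 'I_n | (n - x < n - y)%N] = [set y : 'I_n | (y < x)%N].
  apply/setP => y; rewrite !inE; have := ltn_ord y; have := ltn_ord x.
  by move=> ? ?; apply/idP/idP; lia.
have e2 : [set y : 'I_n | (n - y < n - x)%N] = [set y : 'I_n | (x < y)%N].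
  apply/setP => y; rewrite !inE; have := ltn_ord y; have := ltn_ord x.
  by move=> ? ?; apply/idP/idP; lia.
by rewrite e1 e2.
Qed.
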